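(* Let $A$ be a commutative algebra over a field with multiplication $\star$ satisfying the Tortken identity $$(a\star b)\star(c\star d)-(a\star d)\star(c\star b)=(a,b,c)\star d-(a,d,c)\star b\quad\text{for all }a,b,c,d\in A.$$ Then for all $a,b,c,x\in A$: $(a,b\star x,c)+(b,c\star x,a)+(c,a\star x,b)=0$.
   Context: The associator is $(a,b,c)=a\star(b\star c)-(a\star b)\star c$. *)

(* Defs.v *)
From mathcomp Require Import all_boot all_algebra.
Set Implicit Arguments. Unset Strict Implicit. Unset Printing Implicit Defensive.
Import GRing.Theory.
Local Open Scope ring_scope.

Definition bilinear_mul (K : fieldType) (V : lmodType K) (m : V -> V -> V) :=
  (forall k a b c, m (k *: a + b) c = k *: m a c + m b c) /\
  (forall k a b c, m a (k *: b + c) = k *: m a b + m a c).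

Definition commutative_mul (V : Type) (m : V -> V -> V) := forall a b, m a b = m b a.

Definition assoc (V : zmodType) (m : V -> V -> V) (a b c : V) : V :=
  m a (m b c) - m (m a b) c.

Definition tortken (V : zmodType) (m : V -> V -> V) :=
  forall a b c d,
    m (m a b) (m c d) - m (m a d) (m c b) = m (assoc m a b c) d - m (assoc m a d c) b.

(* Main.v *)
Require Import Defs.
From mathcomp Require Import all_boot all_algebra.
From mathcomp Require Import ring.
Local Open Scope ring_scope.
Import GRing.Theory.

Section F.
Variables (V : zmodType) (t : nat -> V).
Definition F (c : nat -> int) : V := \sum_(i < 12) t i *~ c i.
Lemma FD c d : F c + F d = F (fun i => c i + d i).
Proof. by rewrite /F -big_split; apply: eq_bigr => i _; rewrite mulrzDr. Qed.
Lemma FN c : - F c = F (fun i => - c i).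
Proof. by rewrite /F -sumrN; apply: eq_bigr => i _; rewrite mulrNz. Qed.
Lemma Fdelta k : (k < 12)%N -> t k = F (fun i => (i == k)%:Z).
Proof.
move=> hk; rewrite /F (bigD1 (Ordinal hk)) //= eqxx mulr1z big1 ?addr0 //.
by move=> i /negbTE; rewrite -val_eqE /= => ->; rewrite mulr0z.
Qed.
Lemma Feq c d : (forall i, c i = d i) -> F c = F d.
Proof. by move=> h; apply: eq_bigr => i _; rewrite h. Qed.

Lemma ac_id :
  let P := t 0 in let Q := t 1 in let R := t 2 in let A1 := t 3 in let A2 := t 4 in
  let A3 := t 5 in let Y1 := t 6 in let Z1 := t 7 in let Y2 := t 8 in let Z2 := t 9 in
  let Y3 := t 10 in let Z3 := t 11 in
  Z3 - Y2 + (Y1 - Y3) + (Z2 - Z1) =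
  ((P - Q) - (A1 - A2 - (Y1 - Z1))) - ((R - Q) - (A1 - A3 - (Y2 - Z2)))
   - ((P - R) - (A3 - A2 - (Y3 - Z3))).
Proof.
move=> P Q R A1 A2 A3 Y1 Z1 Y2 Z2 Y3 Z3.
rewrite /P /Q /R /A1 /A2 /A3 /Y1 /Z1 /Y2 /Z2 /Y3 /Z3.
rewrite !(@Fdelta 0) // !(@Fdelta 1) // !(@Fdelta 2) // !(@Fdelta 3) // !(@Fdelta 4) //
  !(@Fdelta 5) // !(@Fdelta 6) // !(@Fdelta 7) // !(@Fdelta 8) // !(@Fdelta 9) //
  !(@Fdelta 10) // !(@Fdelta 11) //.
rewrite !FN !FD !FN !FD.
rewrite ?FN ?FD ?FN ?FD ?FN ?FD.
apply: Feq => i; ring.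
Qed.
End F.

Lemma ac_id2 (V : zmodType) (P Q R A1 A2 A3 Y1 Z1 Y2 Z2 Y3 Z3 : V) :
  Z3 - Y2 + (Y1 - Y3) + (Z2 - Z1) =
  ((P - Q) - (A1 - A2 - (Y1 - Z1))) - ((R - Q) - (A1 - A3 - (Y2 - Z2)))
   - ((P - R) - (A3 - A2 - (Y3 - Z3))).
Proof. exact (@ac_id V (fun i => nth 0 [:: P; Q; R; A1; A2; A3; Y1; Z1; Y2; Z2; Y3; Z3] i)). Qed.

Theorem mainTheorem5 (K : fieldType) (V : lmodType K) (m : V -> V -> V)
  (hbil : bilinear_mul m) (hcomm : commutative_mul m) (htk : tortken m) :
  forall a b c x : V,
    assoc m a (m b x) c + assoc m b (m c x) a + assoc m c (m a x) b = 0.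
Proof.
move=> a b c x.
have mB u v w : m (u - v) w = m u w - m v w.
  by rewrite -[u - v]addrC -scaleN1r hbil.1 scaleN1r addrC.
have E1 := htk a b c x; have E2 := htk a c b x; have E3 := htk b a c x.
rewrite /assoc !mB in E1 E2 E3 *.
rewrite [m c b]hcomm in E1.
rewrite [m c b]hcomm in E2.
rewrite [m b a]hcomm [m c a]hcomm [m (m b x) _]hcomm [m b (m a c)]hcomm in E3.
rewrite [m a (m (m b x) c)]hcomm [X in m (m a X) c]hcomm.
rewrite [m b (m (m c x) a)]hcomm [m (m c x) a]hcomm ![m c x]hcomm.
rewrite [m c (m (m a x) b)]hcomm [m c (m a x)]hcomm.
rewrite (@ac_id2 _ (m (m a b) (m c x)) (m (m a x) (m b c)) (m (m a c) (m b x)) (m (m a (m b c)) x) (m (m (m a b) c) x) (m (m (m a c) b) x)) E1 E2 E3 !subrr; rewrite ?subr0 ?oppr0 ?addr0.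
done.
Qed.
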